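(* Let $f:2^N\to\mathbb R$ be a monotone submodular function with curvature $c$, and let $\mathcal D$ be a product distribution on $2^N$ with bounded marginals. Then \textsc{MaxMargCont} is a $((1-c)^2-o(1))$-OPS algorithm: given a sufficiently large polynomial number of samples $(S_j,f(S_j))$ with $S_j$ i.i.d. from $\mathcal D$, with probability at least $1-\delta$ ($\delta\in[0,1)$ a constant) it returns a set $S$ with $|S|=k$ and $f(S)\ge((1-c)^2-o(1))\max_{T:|T|\le k}f(T)$.
   Context: $N=\{e_1,\dots,e_n\}$. $f_S(e)=f(S\cup\{e\})-f(S)$; $f$ is monotone if $f_S(e)\ge0$ and submodular if $f_S(e)\ge f_T(e)$ for all $S\subseteq T$. The curvature of $f$ is $c=1-\min_{e\in N,S\subseteq N}f_{S\setminus\{e\}}(e)/f(\{e\})$. A product distribution includes each element independently; it has bounded marginals if for every $e$, both $\Pr[e\in S]$ and $\Pr[e\notin S]$ ($S\sim\mathcal D$) lie between $1/\mathrm{poly}(n)$ and $1-1/\mathrm{poly}(n)$. \textsc{MaxMargCont}: for each $i$, let $\mathcal S_i$ (resp. $\mathcal S_{-i}$) be the samples containing (resp. not containing) $e_i$, compute $\hat v_i=\frac{1}{|\mathcal S_i|}\sum_{S\in\mathcal S_i}f(S)-\frac{1}{|\mathcal S_{-i}|}\sum_{S\in\mathcal S_{-i}}f(S)$, and return $\arg\max_{|T|=k}\sum_{e_i\in T}\hat v_i$. *)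

(* Defs.v *)
From HB Require Import structures.
From mathcomp Require Import all_boot all_order all_algebra.
From mathcomp Require Import reals.
Set Implicit Arguments. Unset Strict Implicit. Unset Printing Implicit Defensive.
Import Order.TTheory GRing.Theory Num.Theory.
Local Open Scope ring_scope.

Section OPS.
Variables (R : realType) (n : nat).
Implicit Types (f : {set 'I_n} -> R) (S T : {set 'I_n}) (i : 'I_n).

Definition marg f S i : R := f (i |: S) - f S.

Definition monotone f : Prop := forall S i, 0 <= marg f S i.

Definition submodular f : Prop :=
  forall S T i, S \subset T -> marg f T i <= marg f S i.

(* curvature c = 1 - min_{e, S} f_{S \ {e}}(e) / f({e}).
   The finite min is taken with seed 1; for nonnegative monotone submodular f
   every ratio is <= 1, so the seed only matters when n = 0. *)
Definition curvature f : R :=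
  1 - \big[Num.min/1]_(i : 'I_n) \big[Num.min/1]_(S : {set 'I_n})
        (marg f (S :\ i) i / f [set i]).

Definition prod_dist (p : 'I_n -> R) S : R :=
  \prod_(i < n) (if i \in S then p i else 1 - p i).

Definition bounded_marginals (a : nat) (p : 'I_n -> R) : Prop :=
  forall i, (n%:R ^+ a)^-1 <= p i /\ p i <= 1 - (n%:R ^+ a)^-1.

Definition sample_prob (m : nat) (p : 'I_n -> R)
    (E : {ffun 'I_m -> {set 'I_n}} -> bool) : R :=
  \sum_(s : {ffun 'I_m -> {set 'I_n}} | E s) \prod_(j < m) prod_dist p (s j).

Definition vhat m f (s : {ffun 'I_m -> {set 'I_n}}) i : R :=
  (\sum_(j < m | i \in s j) f (s j)) / #|[set j : 'I_m | i \in s j]|%:R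
  - (\sum_(j < m | i \notin s j) f (s j)) / #|[set j : 'I_m | i \notin s j]|%:R.

(* T is a possible output of MaxMargCont (any arg max, ties arbitrary) *)
Definition maxmargcont_output m f (s : {ffun 'I_m -> {set 'I_n}}) (k : nat) T
    : bool :=
  (#|T| == k) &&
  [forall T' : {set 'I_n}, (#|T'| == k) ==>
     (\sum_(i in T') vhat f s i <= \sum_(i in T) vhat f s i)].

Definition opt f (k : nat) : R := \big[Num.max/f set0]_(T : {set 'I_n} | (#|T| <= k)%N) f T.

Definition good_event m f (k : nat) (alpha : R)
    (s : {ffun 'I_m -> {set 'I_n}}) : bool :=
  [forall T : {set 'I_n}, maxmargcont_output f s k T ==> (alpha * opt f k <= f T)].

End OPS.

(* Main.v *)
Require Import Defs.
From HB Require Import structures.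
From mathcomp Require Import all_boot all_order all_algebra.
From mathcomp Require Import reals.
From mathcomp Require Import ring lra zify.
Set Implicit Arguments. Unset Strict Implicit. Unset Printing Implicit Defensive.
Import Order.TTheory GRing.Theory Num.Theory.
Local Open Scope ring_scope.

Lemma set_indP (T : finType) (P : {set T} -> Prop) :
  P set0 -> (forall (x : T) (A : {set T}), x \notin A -> P A -> P (x |: A)) -> forall A, P A.
Proof.
move=> P0 PS A; move: {2}#|A| (erefl #|A|) => k; elim: k A => [|k IH] A hA.
  by move/eqP: hA; rewrite cards_eq0 => /eqP ->.
have : A != set0 by rewrite -card_gt0 hA.
case/set0Pn => x xA.
rewrite -(setD1K xA); apply: PS; first by rewrite !inE eqxx.
apply: IH; move: hA; rewrite (cardsD1 x A) xA add1n; by case.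
Qed.

Section SF.
Variables (R : realType) (n : nat) (f : {set 'I_n} -> R).
Implicit Types (S T A : {set 'I_n}).
Hypotheses (f0 : forall S, 0 <= f S) (fmon : monotone f) (fsub : submodular f).

Lemma mono_sub S T : S \subset T -> f S <= f T.
Proof.
move=> sST; have -> : T = S :|: (T :\: S) by apply/setP=> x; rewrite !inE; case: (boolP (x \in S)) => // /(subsetP sST) ->.
elim/set_indP: (T :\: S) => [|x A _ IH]; first by rewrite setU0.
apply: (le_trans IH); rewrite setUCA.
by have := fmon (S :|: A) x; rewrite /marg subr_ge0.
Qed.

Lemma f_le_top S : f S <= f setT.
Proof. by apply: mono_sub; apply: subsetT. Qed.

Lemma marg_le_single S i : marg f S i <= f [set i].
Proof.
apply: (le_trans (fsub i (sub0set S))); rewrite /marg setU0 lerBlDr lerDl //.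
Qed.

Lemma subadd A : f A <= f set0 + \sum_(i in A) (f [set i] - f set0).
Proof.
elim/set_indP: A => [|x A xA IH]; first by rewrite big_set0 addr0.
rewrite (big_setD1 x) ?inE ?eqxx // setU1K //.
have := marg_le_single A x; rewrite /marg => h.
have := fsub x (sub0set A); rewrite /marg setU0 => h2.
rewrite addrCA; apply: (le_trans _ (lerD h2 IH)).
by rewrite subrK.
Qed.

Lemma subadd_ne A : A != set0 -> f A <= \sum_(i in A) f [set i].
Proof.
move=> An; apply: (le_trans (subadd A)).
rewrite sumrB sumr_const.
have : (1 <= #|A|)%N by rewrite card_gt0.
case: #|A| => // k _.
rewrite mulrSr.
have := mulrn_wge0 k (f0 set0).
set Y := f set0 *+ k; set X := \sum_(i in A) _ .
move=> hY; rewrite -subr_ge0.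
have -> : X - (f set0 + (X - (Y + f set0))) = Y by ring.
done.
Qed.

End SF.

Section Curv.
Variables (R : realType) (n : nat) (f : {set 'I_n} -> R).
Implicit Types (S T A : {set 'I_n}).
Hypotheses (f0 : forall S, 0 <= f S) (fmon : monotone f) (fsub : submodular f).

Definition cmin := \big[Num.min/1]_(i : 'I_n) \big[Num.min/1]_(S : {set 'I_n})
        (marg f (S :\ i) i / f [set i]).

Lemma curvE : 1 - curvature f = cmin.
Proof. by rewrite /curvature /cmin opprB addrC subrK. Qed.

Lemma cmin_le1 : cmin <= 1.
Proof.
rewrite /cmin; elim/big_rec: _ => // i x _ h.
by rewrite ge_min h orbT.
Qed.

Lemma cmin_ge0 : 0 <= cmin.
Proof.
rewrite /cmin; apply: le_bigmin => // i _; apply: le_bigmin => // S _.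
by apply: divr_ge0 => //; apply: fmon.
Qed.

Lemma cmin_marg A i : i \notin A -> cmin * f [set i] <= marg f A i.
Proof.
move=> iA.
have h : cmin <= marg f A i / f [set i].
  apply: (le_trans (bigmin_le _ i _)).
  apply: (le_trans (bigmin_le _ A _)).
  suff -> : A :\ i = A by [].
  by apply/setP => x; rewrite !inE; case: eqP => // ->; rewrite (negbTE iA).
have := f0 [set i]; rewrite le_eqVlt => /orP [/eqP <-|fp].
  by rewrite mulr0; apply: fmon.
by rewrite -ler_pdivlMr.
Qed.

Lemma tele A : cmin * \sum_(i in A) f [set i] <= f A.
Proof.
suff : f set0 + cmin * \sum_(i in A) f [set i] <= f A.
  by apply: le_trans; rewrite lerDr.
elim/set_indP: A => [|x A xA IH]; first by rewrite big_set0 mulr0 addr0.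
rewrite (big_setD1 x) ?inE ?eqxx // setU1K // mulrDr addrCA.
have := cmin_marg xA; rewrite /marg => h.
have := lerD h IH; rewrite addrC subrK; apply: le_trans.
by rewrite addrC.
Qed.

End Curv.

Section Prob.
Variables (R : realType) (n : nat) (p : 'I_n -> R).
Hypothesis hp : forall i, 0 <= p i <= 1.
Implicit Types (S T A : {set 'I_n}) (i : 'I_n).

Notation P := (prod_dist p).

Lemma P_ge0 S : 0 <= P S.
Proof.
rewrite /prod_dist; apply: prodr_ge0 => i _; case: ifP => _; have /andP[h1 h2] := hp i => //.
by rewrite subr_ge0.
Qed.

Lemma sum_P : \sum_S P S = 1.
Proof.
have h1 : \prod_(i < n) \sum_(b : bool) (if b then p i else 1 - p i) = 1.
  by apply: big1 => i _; rewrite big_bool /= addrC subrK.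
rewrite -h1 bigA_distr_bigA /=.
rewrite (reindex (fun g : {ffun 'I_n -> bool} => [set x | g x])).
  by apply: eq_bigr => g _; apply: eq_bigr => i _; rewrite inE.
apply: onW_bij; exists (fun S => [ffun x => x \in S]).
  by move=> g; apply/ffunP => x; rewrite ffunE inE.
by move=> S; apply/setP => x; rewrite inE ffunE.
Qed.

Definition Q i S := \prod_(l | l != i) (if l \in S then p l else 1 - p l).

Lemma Q_ge0 i S : 0 <= Q i S.
Proof.
rewrite /Q; apply: prodr_ge0 => l _; case: ifP => _; have /andP[h1 h2] := hp l => //.
by rewrite subr_ge0.
Qed.

Lemma P_in i S : i \notin S -> P (i |: S) = p i * Q i S.
Proof.
move=> iS; rewrite /prod_dist (bigD1 i) //= setU11; congr (_ * _).
by apply: eq_bigr => l li; rewrite in_setU1 (negbTE li).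
Qed.

Lemma P_out i S : i \notin S -> P S = (1 - p i) * Q i S.
Proof.
by move=> iS; rewrite /prod_dist (bigD1 i) //= (negbTE iS).
Qed.

Lemma pair1 i (h : {set 'I_n} -> R) :
  \sum_(S : {set 'I_n} | i \in S) P S * h S = p i * \sum_(S : {set 'I_n} | i \notin S) Q i S * h (i |: S).
Proof.
rewrite (reindex_onto (fun S : {set 'I_n} => i |: S) (fun S : {set 'I_n} => S :\ i)); last by move=> S; apply: setD1K.
rewrite mulr_sumr; apply: eq_big.
  move=> S; rewrite setU11 /=; case: (boolP (i \in S)) => iS.
    by apply/negbTE/eqP => hh; move: iS; rewrite -hh !inE eqxx.
  by rewrite setU1K ?eqxx.
by move=> S /andP[_ /eqP <-]; rewrite P_in ?mulrA // !inE eqxx.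
Qed.

Lemma pair0 i (h : {set 'I_n} -> R) :
  \sum_(S : {set 'I_n} | i \notin S) P S * h S = (1 - p i) * \sum_(S : {set 'I_n} | i \notin S) Q i S * h S.
Proof. by rewrite mulr_sumr; apply: eq_bigr => S iS; rewrite (P_out iS) mulrA. Qed.

Lemma sumQ i : \sum_(S : {set 'I_n} | i \notin S) Q i S = 1.
Proof.
have e1 : \sum_(S : {set 'I_n} | i \in S) P S = p i * \sum_(S : {set 'I_n} | i \notin S) Q i S.
  have := pair1 i (fun _ => 1).
  rewrite (eq_bigr (fun S => P S)); last by move=> *; rewrite mulr1.
  by rewrite [in X in _ = _ * X -> _](eq_bigr (fun S => Q i S)) // => *; rewrite mulr1.
have e0 : \sum_(S : {set 'I_n} | i \notin S) P S = (1 - p i) * \sum_(S : {set 'I_n} | i \notin S) Q i S.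
  have := pair0 i (fun _ => 1).
  rewrite (eq_bigr (fun S => P S)); last by move=> *; rewrite mulr1.
  by rewrite [in X in _ = _ * X -> _](eq_bigr (fun S => Q i S)) // => *; rewrite mulr1.
have := sum_P; rewrite (bigID (fun S => i \in S)) /= e1 e0 -mulrDl addrC subrK mul1r //.
Qed.

End Prob.

Section Samp.
Variables (R : realType) (n : nat) (p : 'I_n -> R) (m : nat).
Hypothesis hp : forall i, 0 <= p i <= 1.
Notation P := (prod_dist p).
Notation SS := {ffun 'I_m -> {set 'I_n}}.

Definition w (s : SS) := \prod_(j < m) P (s j).

Lemma w_ge0 s : 0 <= w s.
Proof. by apply: prodr_ge0 => j _; apply: P_ge0. Qed.

Lemma E_prod (G : 'I_m -> {set 'I_n} -> R) :
  \sum_(s : SS) w s * \prod_(j < m) G j (s j) =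
  \prod_(j < m) \sum_(x : {set 'I_n}) P x * G j x.
Proof.
rewrite bigA_distr_bigA /=; apply: eq_bigr => s _.
by rewrite /w -big_split.
Qed.

Lemma sum_w : \sum_(s : SS) w s = 1.
Proof.
have := E_prod (fun _ _ => 1).
rewrite (eq_bigr (fun s => w s)); last first.   by move=> s _; rewrite big1 // ?mulr1. 
move=> ->; apply: big1 => j _.
by rewrite (eq_bigr (fun x => P x)) ?sum_P // => x _; rewrite mulr1.
Qed.

Lemma prod_pick (j : 'I_m) (F : 'I_m -> R) :
  \prod_(l < m) (if l == j then F l else 1) = F j.
Proof. by rewrite -big_mkcond big_pred1_eq. Qed.

Lemma variance (D : {set 'I_n} -> R) (B2 : R) :
  \sum_(x : {set 'I_n}) P x * D x = 0 -> (forall x, D x ^+ 2 <= B2) ->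
  \sum_(s : SS) w s * (\sum_(j < m) D (s j)) ^+ 2 <= m%:R * B2.
Proof.
move=> hD0 hDB.
have hB2 : 0 <= B2 by apply: le_trans (hDB set0); apply: sqr_ge0.
have step : forall s : SS, w s * (\sum_(j < m) D (s j)) ^+ 2 =
   \sum_(j < m) \sum_(k < m) w s * \prod_(l < m)
       ((if l == j then D (s l) else 1) * (if l == k then D (s l) else 1)).
  move=> s; rewrite expr2 mulr_suml mulr_sumr; apply: eq_bigr => j _.
  rewrite mulr_sumr mulr_sumr; apply: eq_bigr => k _.
  by rewrite big_split /= !prod_pick mulrA.
rewrite (eq_bigr _ (fun s _ => step s)) exchange_big /=.
rewrite (eq_bigr (fun j => \sum_(k < m) \prod_(l < m) \sum_(x : {set 'I_n}) P x *
   ((if l == j then D x else 1) * (if l == k then D x else 1)))); last first.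
  move=> j _; rewrite exchange_big /=; apply: eq_bigr => k _.
  by rewrite -(E_prod (fun l x => (if l == j then D x else 1) * (if l == k then D x else 1))).
have -> : m%:R * B2 = \sum_(j < m) B2 by rewrite sumr_const card_ord mulr_natl.
apply: ler_sum => j _.
rewrite (@bigD1 R +%R 0 'I_m j) //= [X in _ + X]big1 ?addr0; last first.
  move=> k kj; rewrite (@bigD1 R *%R 1 'I_m j) //=.
  have jk : (j == k) = false by rewrite eq_sym (negbTE kj).
  rewrite eqxx jk (eq_bigr (fun x => P x * D x)); last by move=> x _; rewrite mulr1.
  by rewrite hD0 mul0r.
rewrite (@bigD1 R *%R 1 'I_m j) //= [X in _ * X]big1; last first.
  move=> l lj; rewrite (negbTE lj) (eq_bigr (fun x => P x)) ?sum_P // => x _.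
  by rewrite !mulr1.
rewrite eqxx mulr1 -[B2](mulr1) -(sum_P p) mulr_sumr.
apply: ler_sum => x _; rewrite mulrC ler_wpM2r ?P_ge0 //.
by rewrite -expr2.
Qed.

Lemma cheb (D : {set 'I_n} -> R) (B2 t2 : R) :
  \sum_(x : {set 'I_n}) P x * D x = 0 -> (forall x, D x ^+ 2 <= B2) -> 0 < t2 ->
  \sum_(s : SS | t2 < (\sum_(j < m) D (s j)) ^+ 2) w s <= m%:R * B2 / t2.
Proof.
move=> hD0 hDB ht.
rewrite ler_pdivlMr //.
apply: le_trans (variance hD0 hDB).
rewrite mulr_suml [X in _ <= X](bigID (fun s : SS => t2 < (\sum_(j < m) D (s j)) ^+ 2)) /=.
rewrite -[X in X <= _]addr0; apply: lerD.
  apply: ler_sum => s hs; apply: ler_wpM2l; [exact: w_ge0| exact: ltW].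
by apply: sumr_ge0 => s _; apply: mulr_ge0; [exact: w_ge0| exact: sqr_ge0].
Qed.

Definition mu (h : {set 'I_n} -> R) := \sum_(x : {set 'I_n}) P x * h x.

Lemma mu_bound (h : {set 'I_n} -> R) (B : R) : (forall x, 0 <= h x <= B) -> 0 <= mu h <= B.
Proof.
move=> hb; apply/andP; split.
  by apply: sumr_ge0 => x _; apply: mulr_ge0; [apply: P_ge0|case/andP: (hb x)].
rewrite -[B]mul1r -(sum_P p) mulr_suml; apply: ler_sum => x _.
by rewrite ler_wpM2l ?P_ge0 //; case/andP: (hb x).
Qed.

Lemma sqr_diff_le (a b B : R) : 0 <= a <= B -> 0 <= b <= B -> (a - b) ^+ 2 <= B ^+ 2.
Proof.
move=> /andP[h1 h2] /andP[h3 h4].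
have e1 : 0 <= B - (a - b) by lra.
have e2 : 0 <= B + (a - b) by lra.
have e3 := mulr_ge0 e1 e2.
by rewrite -subr_ge0; have -> : B ^+ 2 - (a - b) ^+ 2 = (B - (a - b)) * (B + (a - b)) by ring.

Qed.

Lemma cheb_h (h : {set 'I_n} -> R) (B z : R) : (forall x, 0 <= h x <= B) -> 0 < B -> 0 < z -> (0 < m)%N ->
  \sum_(s : SS | (z * m%:R * B) ^+ 2 < (\sum_(j < m) h (s j) - m%:R * mu h) ^+ 2) w s
   <= 1 / (z ^+ 2 * m%:R).
Proof.
move=> hb hB hz hm.
have hm' : 0 < m%:R :> R by rewrite ltr0n.
have hmu := mu_bound hb.
have e : forall s : SS, \sum_(j < m) h (s j) - m%:R * mu h = \sum_(j < m) (h (s j) - mu h).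
  by move=> s; rewrite sumrB sumr_const card_ord mulr_natl.
under eq_bigl do rewrite e.
have hD0 : \sum_(x : {set 'I_n}) P x * (h x - mu h) = 0.
  under eq_bigr do rewrite mulrBr.
  by rewrite sumrB -mulr_suml sum_P mul1r subrr.
have hDB : forall x, (h x - mu h) ^+ 2 <= B ^+ 2 by move=> x; apply: sqr_diff_le.
apply: le_trans (cheb hD0 hDB _) _.
  by rewrite exprn_gt0 // mulr_gt0 // mulr_gt0.
rewrite le_eqVlt; apply/orP; left; apply/eqP; field.
by rewrite !lt0r_neq0.
Qed.

Lemma union2 (a b : SS -> bool) :
  \sum_(s : SS | a s || b s) w s <= \sum_(s : SS | a s) w s + \sum_(s : SS | b s) w s.
Proof.
rewrite [X in X <= _]big_mkcond [X in _ <= X + _]big_mkcond [X in _ <= _ + X]big_mkcond -big_split.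
apply: ler_sum => s _; case: (a s); case: (b s) => /=; rewrite ?addr0 ?add0r //.
  by rewrite lerDl w_ge0.
Qed.

Lemma union_ex (K : finType) (E : K -> SS -> bool) :
  \sum_(s : SS | [exists k, E k s]) w s <= \sum_(k : K) \sum_(s : SS | E k s) w s.
Proof.
rewrite (exchange_big_dep xpredT) //=.
apply: le_trans (_ : \sum_(s : SS | [exists k, E k s]) \sum_(k | E k s) w s <= _).
  apply: ler_sum => s /existsP[k hk]; rewrite (bigD1 k) //= lerDl.
  by apply: sumr_ge0 => *; apply: w_ge0.
rewrite [X in _ <= X](bigID (fun s : SS => [exists k, E k s])) /= lerDl.
by apply: sumr_ge0 => s _; apply: sumr_ge0 => *; apply: w_ge0.
Qed.

End Samp.

Lemma sq_abs (R : realType) (x y : R) : x ^+ 2 <= y ^+ 2 -> 0 <= y -> `|x| <= y.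
Proof.
by move=> h hy; rewrite -ler_sqr ?nnegrE ?normr_ge0 // real_normK ?num_real.
Qed.

Lemma extend_set (n k : nat) (T : {set 'I_n}) : (#|T| <= k)%N -> (k <= n)%N ->
  exists2 T' : {set 'I_n}, T \subset T' & #|T'| = k.
Proof.
move=> hT hk; move: {2}(k - #|T|)%N (erefl (k - #|T|)%N) => d.
elim: d T hT => [|d IH] T hT hd.
  by exists T => //; apply/eqP; rewrite eqn_leq hT /= -subn_eq0 hd.
have : T != setT.
  apply/negP => /eqP eT; move: hd; rewrite eT cardsT card_ord.
  by move: hk; rewrite -subn_eq0 => /eqP ->.
move=> Tn.
case: (pickP (fun x => x \notin T)) => [x xT|hn]; last first.
  by case/negP: Tn; apply/eqP/setP => x; rewrite inE; have := hn x; rewrite /=; case: (x \in T).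
have hd' : (k - #|x |: T|)%N = d by rewrite cardsU1 xT add1n subnS hd.
have hT' : (#|x |: T| <= k)%N.
  rewrite cardsU1 xT add1n; lia.
have [T' h1 h2] := IH (x |: T) hT' hd'.
by exists T' => //; apply: subset_trans h1; apply: subsetUr.
Qed.

Section Sel.
Variables (R : realType) (n : nat) (f : {set 'I_n} -> R).
Hypotheses (f0 : forall S, 0 <= f S) (fmon : monotone f) (fsub : submodular f).
Variables (k : nat) (vh v : 'I_n -> R) (eta : R).
Hypotheses (hv : forall i, `|vh i - v i| <= eta)
  (hvl : forall i, cmin f * f [set i] <= v i) (hvu : forall i, v i <= f [set i]).

Lemma sum_lo (T : {set 'I_n}) : \sum_(i in T) v i - #|T|%:R * eta <= \sum_(i in T) vh i.
Proof.
have -> : #|T|%:R * eta = \sum_(i in T) eta by rewrite sumr_const mulr_natl.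
rewrite -sumrB; apply: ler_sum => i _.
by have := hv i; rewrite ler_norml => /andP[h1 h2]; lra.
Qed.

Lemma sum_hi (T : {set 'I_n}) : \sum_(i in T) vh i <= \sum_(i in T) v i + #|T|%:R * eta.
Proof.
have -> : #|T|%:R * eta = \sum_(i in T) eta by rewrite sumr_const mulr_natl.
rewrite -big_split; apply: ler_sum => i _ /=.
by have := hv i; rewrite ler_norml => /andP[h1 h2]; lra.
Qed.

Lemma opt_attain : exists2 T0 : {set 'I_n}, (#|T0| <= k)%N & opt f k = f T0.
Proof.
rewrite /opt; apply: (big_ind (fun x => exists2 T0 : {set 'I_n}, (#|T0| <= k)%N & x = f T0)).
- by exists set0; rewrite ?cards0.
- move=> x y [T1 h1 ->] [T2 h2 ->]; rewrite maxEle; case: ifP => _.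
    by exists T2.
  by exists T1.
- by move=> T hT; exists T.
Qed.

Lemma opt_ge (T : {set 'I_n}) : (#|T| <= k)%N -> f T <= opt f k.
Proof. by move=> hT; rewrite /opt; exact: (le_bigmax_cond _ (fun T : {set 'I_n} => f T) hT). Qed.

Lemma opt_ge0 : 0 <= opt f k.
Proof. have [T0 _ ->] := opt_attain; exact: f0. Qed.

Lemma select (T : {set 'I_n}) : #|T| = k ->
  (forall T' : {set 'I_n}, #|T'| = k -> \sum_(i in T') vh i <= \sum_(i in T) vh i) ->
  (0 < k)%N ->
  cmin f ^+ 2 * opt f k - 2 * k%:R * eta <= f T.
Proof.
move=> hT hmax hk.
have hkn : (k <= n)%N by rewrite -hT; apply: leq_trans (max_card _) _; rewrite card_ord.
have [T0 hT0 eopt] := opt_attain.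
have [T1 hsub hT1] := extend_set hT0 hkn.
have hne : T1 != set0 by rewrite -card_gt0 hT1.
have hopt : opt f k <= \sum_(i in T1) f [set i].
  by rewrite eopt; apply: le_trans (mono_sub fmon hsub) (subadd_ne f0 fsub hne).
have c0 := cmin_ge0 f0 fmon; have c1 := cmin_le1 f.
have e0 : 0 <= eta by apply: le_trans (hv (Ordinal (leq_trans hk hkn))); apply: normr_ge0.
set c := cmin f in c0 c1 hopt *.
have s1 := sum_hi T; have s2 := sum_lo T1; have s3 := hmax T1 hT1.
rewrite hT hT1 in s1 s2.
have hvT : \sum_(i in T) v i <= \sum_(i in T) f [set i] by apply: ler_sum => i _.
have hvT1 : c * \sum_(i in T1) f [set i] <= \sum_(i in T1) v i.
  by rewrite mulr_sumr; apply: ler_sum => i _.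
have ht : c * \sum_(i in T) f [set i] <= f T by apply: tele.
have A : \sum_(i in T1) v i - 2 * k%:R * eta <= \sum_(i in T) v i.
  rewrite -mulrA; set K := k%:R * eta in s1 s2 *; lra.
have B1 : c * (\sum_(i in T1) v i - 2 * k%:R * eta) <= c * \sum_(i in T) v i by apply: ler_wpM2l.
rewrite mulrBr in B1.
have B2 : c * \sum_(i in T) v i <= c * \sum_(i in T) f [set i] by apply: ler_wpM2l.
have B3 : c * (c * \sum_(i in T1) f [set i]) <= c * \sum_(i in T1) v i by apply: ler_wpM2l.
have B4 : c * (c * opt f k) <= c * (c * \sum_(i in T1) f [set i]).
  by apply: ler_wpM2l => //; apply: ler_wpM2l.
have B5 : c * (2 * k%:R * eta) <= 2 * k%:R * eta.
  rewrite -[X in _ <= X]mul1r; apply: ler_wpM2r => //.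
  by apply: mulr_ge0 => //; apply: mulr_ge0 => //.
rewrite expr2.
have -> : c * c * opt f k = c * (c * opt f k) by rewrite mulrA.
lra.
Qed.

End Sel.

Lemma card_sum (R : realType) m (P : pred 'I_m) :
  #|[set j : 'I_m | P j]|%:R = \sum_(j < m) (P j)%:R :> R.
Proof.
rewrite cardsE -sum1_card natr_sum big_mkcond /=; apply: eq_bigr => j _.
by rewrite unfold_in; case: (P j).
Qed.

Lemma ratio_est (R : realFieldType) (X Y A F mm pp q z : R) :
  0 < mm -> 0 < q -> q <= pp -> 0 < z -> z <= q / 2 -> 0 <= A <= F ->
  `|Y - mm * pp| <= z * mm -> `|X - mm * pp * A| <= z * mm * F ->
  `|X / Y - A| <= 4 * z * F / q.
Proof.
move=> hm hq hqp hz hzq /andP[hA hAF] hY hX.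
have hF : 0 <= F by apply: le_trans hAF.
move: hY; rewrite ler_norml => /andP[hY1 hY2].
have hYq : mm * q / 2 <= Y.
  have : mm * (q / 2) <= mm * (pp - z).
    by rewrite ler_pM2l //; lra.
  rewrite mulrA => h; apply: le_trans h _; lra.
have hY0 : 0 < Y by apply: lt_le_trans hYq; apply: divr_gt0 => //; apply: mulr_gt0.
have -> : X / Y - A = (X - A * Y) / Y by field; apply: lt0r_neq0.
rewrite normrM normfV (gtr0_norm hY0) ler_pdivrMr //.
have h1 : `|X - A * Y| <= 2 * z * mm * F.
  have -> : X - A * Y = (X - mm * pp * A) + A * (mm * pp - Y) by ring.
  apply: (le_trans (ler_normD _ _)).
  rewrite normrM (ger0_norm hA).
  have : `|mm * pp - Y| <= z * mm by rewrite distrC ler_norml; apply/andP; split; lra.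
  move=> h2.
  have : A * `|mm * pp - Y| <= F * (z * mm).
    apply: le_trans (ler_wpM2l hA h2) _; apply: ler_wpM2r => //.
    by apply: mulr_ge0; [apply: ltW|apply: ltW].
  move=> h3; apply: le_trans (lerD hX h3) _.
  by rewrite le_eqVlt; apply/orP; left; apply/eqP; ring.
apply: (le_trans h1).
have -> : 4 * z * F / q * Y = (2 * z * F) * (2 * Y / q) by field; apply: lt0r_neq0.
have -> : 2 * z * mm * F = (2 * z * F) * mm by ring.
apply: ler_wpM2l.
  by apply: mulr_ge0 => //; apply: mulr_ge0 => //; apply: ltW.
rewrite ler_pdivlMr //.
lra.
Qed.

Section Main.
Variables (R : realType) (n : nat) (p : 'I_n -> R) (m : nat) (f : {set 'I_n} -> R) (q z : R).
Hypotheses (f0 : forall S, 0 <= f S) (fmon : monotone f) (fsub : submodular f).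
Hypotheses (hq : 0 < q) (hqp : forall i, q <= p i /\ p i <= 1 - q).
Hypotheses (hz : 0 < z) (hzq : z <= q / 2) (hm : (0 < m)%N) (hF : 0 < f setT).
Notation F := (f setT).
Notation SS := {ffun 'I_m -> {set 'I_n}}.
Notation P := (prod_dist p).

Lemma hp i : 0 <= p i <= 1.
Proof. have [h1 h2] := hqp i; have := hq => hq0; apply/andP; split; lra. Qed.

Definition h1 i (S : {set 'I_n}) : R := (i \in S)%:R * f S.
Definition c1 i (S : {set 'I_n}) : R := (i \in S)%:R.
Definition h0 i (S : {set 'I_n}) : R := (i \notin S)%:R * f S.
Definition c0 i (S : {set 'I_n}) : R := (i \notin S)%:R.
Definition A1 i := \sum_(S : {set 'I_n} | i \notin S) Q p i S * f (i |: S).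
Definition A0 i := \sum_(S : {set 'I_n} | i \notin S) Q p i S * f S.
Definition dev (h : {set 'I_n} -> R) (s : SS) := \sum_(j < m) h (s j) - m%:R * mu p h.
Definition goodi i (s : SS) : bool :=
  [&& dev (h1 i) s ^+ 2 <= (z * m%:R * F) ^+ 2, dev (c1 i) s ^+ 2 <= (z * m%:R * 1) ^+ 2,
      dev (h0 i) s ^+ 2 <= (z * m%:R * F) ^+ 2 & dev (c0 i) s ^+ 2 <= (z * m%:R * 1) ^+ 2].

Lemma mu_in i (g : {set 'I_n} -> R) :
  mu p (fun S => (i \in S)%:R * g S) = \sum_(S : {set 'I_n} | i \in S) P S * g S.
Proof.
rewrite /mu [RHS]big_mkcond; apply: eq_bigr => S _.
by case: (i \in S); rewrite ?mul1r ?mul0r ?mulr0.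
Qed.

Lemma mu_out i (g : {set 'I_n} -> R) :
  mu p (fun S => (i \notin S)%:R * g S) = \sum_(S : {set 'I_n} | i \notin S) P S * g S.
Proof.
rewrite /mu [RHS]big_mkcond; apply: eq_bigr => S _.
by case: (i \notin S); rewrite ?mul1r ?mul0r ?mulr0.
Qed.

Lemma sumQ1 i : \sum_(S : {set 'I_n} | i \notin S) Q p i S * 1 = 1.
Proof. by rewrite -[RHS](sumQ p i); apply: eq_bigr => *; rewrite mulr1. Qed.

Lemma mu_h1 i : mu p (h1 i) = p i * A1 i.
Proof. by rewrite /h1 mu_in pair1. Qed.
Lemma mu_h0 i : mu p (h0 i) = (1 - p i) * A0 i.
Proof. by rewrite /h0 mu_out pair0. Qed.
Lemma mu_c1 i : mu p (c1 i) = p i.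
Proof.
have -> : mu p (c1 i) = mu p (fun S => (i \in S)%:R * 1) by apply: eq_bigr => S _; rewrite mulr1.
by rewrite mu_in pair1 sumQ1 mulr1.
Qed.
Lemma mu_c0 i : mu p (c0 i) = 1 - p i.
Proof.
have -> : mu p (c0 i) = mu p (fun S => (i \notin S)%:R * 1) by apply: eq_bigr => S _; rewrite mulr1.
by rewrite mu_out pair0 sumQ1 mulr1.
Qed.

Lemma Aavg i (g : {set 'I_n} -> R) : (forall S, 0 <= g S <= F) ->
  0 <= \sum_(S : {set 'I_n} | i \notin S) Q p i S * g S <= F.
Proof.
move=> hg; apply/andP; split.
  by apply: sumr_ge0 => S _; apply: mulr_ge0; [apply: Q_ge0; apply: hp|case/andP: (hg S)].
rewrite -[F]mul1r -(sumQ p i) mulr_suml; apply: ler_sum => S _.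
by apply: ler_wpM2l; [apply: Q_ge0; apply: hp|case/andP: (hg S)].
Qed.

Lemma fb S : 0 <= f S <= F.
Proof. by rewrite f0 /=; apply: f_le_top. Qed.

Lemma A1b i : 0 <= A1 i <= F.
Proof. by apply: Aavg => S; apply: fb. Qed.
Lemma A0b i : 0 <= A0 i <= F.
Proof. by apply: Aavg => S; apply: fb. Qed.

Lemma vhatE s i : vhat f s i =
  (\sum_(j < m) h1 i (s j)) / (\sum_(j < m) c1 i (s j)) -
  (\sum_(j < m) h0 i (s j)) / (\sum_(j < m) c0 i (s j)).
Proof.
rewrite /vhat !card_sum; congr (_ / _ - _ / _).
- by rewrite big_mkcond; apply: eq_bigr => j _; rewrite /h1; case: (i \in s j); rewrite ?mul1r ?mul0r.
- by rewrite big_mkcond; apply: eq_bigr => j _; rewrite /h0; case: (i \notin s j); rewrite ?mul1r ?mul0r.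
Qed.

Lemma est i s : goodi i s -> `|vhat f s i - (A1 i - A0 i)| <= 8 * z * F / q.
Proof.
case/and4P => g1 g2 g3 g4.
have hm' : 0 < m%:R :> R by rewrite ltr0n.
have hzm : 0 <= z * m%:R * F by apply: mulr_ge0; [apply: mulr_ge0|]; apply: ltW.
have hzm1 : 0 <= z * m%:R * 1 by rewrite mulr1; apply: mulr_ge0; apply: ltW.
move/sq_abs: g1 => /(_ hzm); move/sq_abs: g2 => /(_ hzm1).
move/sq_abs: g3 => /(_ hzm); move/sq_abs: g4 => /(_ hzm1).
rewrite /dev mu_h1 mu_h0 mu_c1 mu_c0 mulr1 => d4 d3 d2 d1.
have [q1 q2] := hqp i.
rewrite mulrA in d1; rewrite mulrA in d3.
have e1 := ratio_est hm' hq q1 hz hzq (A1b i) d2 d1.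
have q3 : q <= 1 - p i by lra.
have e0 := ratio_est hm' hq q3 hz hzq (A0b i) d4 d3.
rewrite vhatE.
have -> : 8 * z * F / q = 4 * z * F / q + 4 * z * F / q by rewrite -mulrDl; congr (_ / _); ring.
set a := _ / _ in e1 *; set b := (\sum_(j < m) h0 i (s j)) / _ in e0 *.
have -> : a - b - (A1 i - A0 i) = (a - A1 i) - (b - A0 i) by ring.
by apply: le_trans (ler_normB _ _) _; apply: lerD.
Qed.

Lemma vE i : A1 i - A0 i = \sum_(S : {set 'I_n} | i \notin S) Q p i S * marg f S i.
Proof. by rewrite /A1 /A0 -sumrB; apply: eq_bigr => S _; rewrite /marg mulrBr. Qed.

Lemma v_lo i : cmin f * f [set i] <= A1 i - A0 i.
Proof.
rewrite vE -[X in X <= _]mul1r -(sumQ p i) mulr_suml; apply: ler_sum => S iS.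
apply: ler_wpM2l; first by apply: Q_ge0; apply: hp.
exact: cmin_marg.
Qed.

Lemma v_hi i : A1 i - A0 i <= f [set i].
Proof.
rewrite vE -[X in _ <= X]mul1r -(sumQ p i) mulr_suml; apply: ler_sum => S iS.
apply: ler_wpM2l; first by apply: Q_ge0; apply: hp.
exact: marg_le_single.
Qed.

Lemma h1b i x : 0 <= h1 i x <= F.
Proof. rewrite /h1; case: (i \in x); rewrite /= ?mulr1n ?mulr0n ?mul1r ?mul0r ?fb // lexx ltW //. Qed.
Lemma h0b i x : 0 <= h0 i x <= F.
Proof. rewrite /h0; case: (i \notin x); rewrite /= ?mulr1n ?mulr0n ?mul1r ?mul0r ?fb // lexx ltW //. Qed.
Lemma c1b i x : 0 <= c1 i x <= 1.
Proof. by rewrite /c1; case: (i \in x); rewrite /= ?mulr1n ?mulr0n ?lexx ?ler01. Qed.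
Lemma c0b i x : 0 <= c0 i x <= 1.
Proof. by rewrite /c0; case: (i \notin x); rewrite /= ?mulr1n ?mulr0n ?lexx ?ler01. Qed.

Lemma bad_i i : \sum_(s : SS | ~~ goodi i s) w p s <= 4 * (1 / (z ^+ 2 * m%:R)).
Proof.
have hpp := hp.
rewrite (eq_bigl (fun s => [|| (z * m%:R * F) ^+ 2 < dev (h1 i) s ^+ 2,
   (z * m%:R * 1) ^+ 2 < dev (c1 i) s ^+ 2,
   (z * m%:R * F) ^+ 2 < dev (h0 i) s ^+ 2 | (z * m%:R * 1) ^+ 2 < dev (c0 i) s ^+ 2])); last first.
  by move=> s; rewrite /goodi !negb_and -!ltNge.
set K := 1 / _.
have k1 := cheb_h hpp (h1b i) hF hz hm.
have k2 := cheb_h hpp (c1b i) ltr01 hz hm.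
have k3 := cheb_h hpp (h0b i) hF hz hm.
have k4 := cheb_h hpp (c0b i) ltr01 hz hm.
rewrite -/K /dev in k1 k2 k3 k4 *.
apply: le_trans (union2 hpp _ _) _.
have -> : 4 * K = K + (K + (K + K)) by ring.
apply: lerD => //.
apply: le_trans (union2 hpp _ _) _; apply: lerD => //.
by apply: le_trans (union2 hpp _ _) _; apply: lerD.
Qed.

Lemma bad_all : \sum_(s : SS | ~~ [forall i, goodi i s]) w p s <= n%:R * (4 * (1 / (z ^+ 2 * m%:R))).
Proof.
rewrite (eq_bigl (fun s => [exists i, ~~ goodi i s])); last by move=> s; rewrite negb_forall.
apply: le_trans (union_ex hp _) _.
set X := 4 * _.
have -> : n%:R * X = \sum_(i < n) X by rewrite sumr_const card_ord mulr_natl.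
apply: ler_sum => i _; exact: bad_i.
Qed.

Lemma prob_lb (E : SS -> bool) : (forall s, [forall i, goodi i s] -> E s) ->
  1 - n%:R * (4 * (1 / (z ^+ 2 * m%:R))) <= @sample_prob R n m p E.
Proof.
move=> hE; rewrite /sample_prob.
have hw := w_ge0 hp.
have hs := sum_w p m; rewrite (bigID (fun s : SS => [forall i, goodi i s])) /= in hs.
have hb := bad_all.
rewrite /w in hb hw hs *.
have : \sum_(s : SS | [forall i, goodi i s]) \prod_(j < m) P (s j) <=
       \sum_(s : SS | E s) \prod_(j < m) P (s j).
  rewrite [X in _ <= X](bigID (fun s : SS => [forall i, goodi i s])) /=.
  rewrite [X in _ <= X + _](eq_bigl (fun s : SS => [forall i, goodi i s])); last first.
    by move=> s; case: (boolP [forall i, goodi i s]) => h; rewrite ?andbT ?andbF //; rewrite hE.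
  by rewrite lerDl; apply: sumr_ge0 => *; apply: hw.
lra.
Qed.

Lemma det_good k eps (s : SS) : 0 < eps -> 16 * n%:R ^+ 2 * z <= eps * q ->
  [forall i, goodi i s] -> @good_event R n m f k (cmin f ^+ 2 - eps) s.
Proof.
move=> he hze /forallP hg.
apply/forallP => T; apply/implyP => /andP[/eqP hT /forallP hmax].
have hmax' : forall T' : {set 'I_n}, #|T'| = k ->
    \sum_(i in T') vhat f s i <= \sum_(i in T) vhat f s i.
  by move=> T' hT'; have /implyP := hmax T'; apply; rewrite hT'.
have c0 := cmin_ge0 f0 fmon; have c1 := cmin_le1 f.
have cc : cmin f ^+ 2 <= 1 by rewrite expr2; apply: mulr_ile1.
have hopt0 := opt_ge0 f0 k.
case: (posnP k) => hk.
  have eT : T = set0 by apply/eqP; rewrite -cards_eq0 hT hk.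
  have [T0 hT0 eo] := opt_attain f k.
  have eT0 : T0 = set0 by apply/eqP; rewrite -cards_eq0; move: hT0; rewrite hk leqn0.
  rewrite eo eT0 -eT -subr_ge0.
  have -> : f T - (cmin f ^+ 2 - eps) * f T = (1 - cmin f ^+ 2 + eps) * f T by ring.
  by apply: mulr_ge0 => //; lra.
set eta := 8 * z * F / q.
have hv : forall i, `|vhat f s i - (A1 i - A0 i)| <= eta by move=> i; apply: est.
have := select f0 fmon fsub hv v_lo v_hi hT hmax' hk.
move=> hsel.
have hkn : (k <= n)%N by rewrite -hT; apply: leq_trans (max_card _) _; rewrite card_ord.
have hn : (0 < n)%N by apply: leq_trans hk hkn.
have hN : 0 < n%:R :> R by rewrite ltr0n.
have hKN : k%:R <= n%:R :> R by rewrite ler_nat.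
have hFn : F <= n%:R * opt f k.
  have ne : [set: 'I_n] != set0 by rewrite -card_gt0 cardsT card_ord.
  apply: le_trans (subadd_ne f0 fsub ne) _.
  have -> : n%:R * opt f k = \sum_(i in [set: 'I_n]) opt f k by rewrite sumr_const cardsT card_ord mulr_natl.
  apply: ler_sum => i _; apply: opt_ge; rewrite cards1; exact: hk.
have hF0 : 0 <= F := ltW hF.
have key : 2 * k%:R * eta <= eps * opt f k.
  have a1 : 16 * n%:R ^+ 2 * z * F <= eps * q * (n%:R * opt f k).
    apply: le_trans (ler_wpM2r hF0 hze) _.
    by apply: ler_wpM2l => //; apply: mulr_ge0; apply: ltW.
  have a2 : 2 * k%:R * eta <= 16 * n%:R * z * F / q.
    rewrite /eta ler_pdivlMr // mulrA divfK ?lt0r_neq0 //.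
    have -> : 2 * k%:R * (8 * z * F) = (k%:R) * (16 * z * F) by ring.
    have -> : 16 * n%:R * z * F = (n%:R) * (16 * z * F) by ring.
    by apply: ler_wpM2r => //; apply: mulr_ge0 => //; apply: mulr_ge0 => //; apply: ltW.
  apply: (le_trans a2).
  rewrite ler_pdivrMr //.
  rewrite -(ler_pM2l hN).
  have -> : n%:R * (16 * n%:R * z * F) = 16 * n%:R ^+ 2 * z * F by rewrite expr2; ring.
  apply: (le_trans a1); rewrite le_eqVlt; apply/orP; left; apply/eqP; ring.
rewrite mulrBl; lra.
Qed.

End Main.
Lemma numbound (R : realType) (N e delta mr : R) (a : nat) :
  1 <= N -> 0 < e -> 0 < delta -> 1024 / (e ^+ 2 * delta) <= N -> N ^+ (2 * a + 6) <= mr ->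
  N * (4 * (1 / ((e * (N ^+ a)^-1 / (16 * N ^+ 2)) ^+ 2 * mr))) <= delta.
Proof.
move=> hN he hd hbN hm.
have N0 : 0 < N by lra.
have u0 : 0 < N ^+ a by apply: exprn_gt0.
set z := e * (N ^+ a)^-1 / (16 * N ^+ 2).
have z0 : 0 < z by apply: divr_gt0; [apply: mulr_gt0 => //; rewrite invr_gt0|apply: mulr_gt0 => //; apply: exprn_gt0].
have eN : N ^+ (2 * a + 6) = (N ^+ a) ^+ 2 * N ^+ 6 by rewrite exprD mulnC exprM.
have hL : e ^+ 2 * N ^+ 2 / 256 <= z ^+ 2 * mr.
  have -> : e ^+ 2 * N ^+ 2 / 256 = z ^+ 2 * N ^+ (2 * a + 6).
    rewrite eN /z; field; apply/andP; split; apply: lt0r_neq0 => //.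
  by apply: ler_wpM2l => //; apply: sqr_ge0.
have L0 : 0 < e ^+ 2 * N ^+ 2 / 256 by apply: divr_gt0 => //; apply: mulr_gt0; apply: exprn_gt0.
have Z0 : 0 < z ^+ 2 * mr by apply: lt_le_trans hL.
set Z := z ^+ 2 * mr in hL Z0 *.
have -> : N * (4 * (1 / Z)) = (4 * N) / Z by rewrite mul1r mulrA [N * 4]mulrC.
rewrite ler_pdivrMr //.
apply: le_trans (_ : delta * (e ^+ 2 * N ^+ 2 / 256) <= _); last by apply: ler_wpM2l => //; apply: ltW.
have ed : 0 < e ^+ 2 * delta by apply: mulr_gt0 => //; apply: exprn_gt0.
move: hbN; rewrite ler_pdivrMr // => hb.
have -> : delta * (e ^+ 2 * N ^+ 2 / 256) = N * (N * (e ^+ 2 * delta)) / 256 by rewrite expr2; ring.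
rewrite ler_pdivlMr //.
have : N * 1024 <= N * (N * (e ^+ 2 * delta)) by apply: ler_wpM2l => //; apply: ltW.
lra.
Qed.

Theorem theorem4 (R : realType) (a : nat) (delta eps : R) :
  0 < delta < 1 -> 0 < eps ->
  exists n0 d : nat, forall n : nat, (n0 <= n)%N ->
  forall (k : nat) (f : {set 'I_n} -> R) (p : 'I_n -> R),
    (forall S, 0 <= f S) -> monotone f -> submodular f ->
    bounded_marginals a p ->
    forall m : nat, (n ^ d <= m)%N ->
      1 - delta <=
      @sample_prob R n m p (@good_event R n m f k ((1 - curvature f) ^+ 2 - eps)).
Proof.
move=> /andP[hd0 hd1] he.
set e := Num.min eps 1.
have e0 : 0 < e by rewrite lt_min he ltr01.
have e1 : e <= 1 by rewrite ge_min lexx orbT.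
have ee : e <= eps by rewrite ge_min lexx.
have ed : 0 <= 1024 / (e ^+ 2 * delta).
  by apply: divr_ge0 => //; apply: mulr_ge0; [apply: sqr_ge0|apply: ltW].
exists (maxn 1 (Num.bound (1024 / (e ^+ 2 * delta)))), (2 * a + 6)%N.
move=> n hn k f p f0 fmon fsub hbm m hm.
have n1 : (1 <= n)%N by apply: leq_trans hn; apply: leq_maxl.
have hN1 : 1 <= n%:R :> R by rewrite ler1n.
have hN0 : 0 < n%:R :> R by lra.
have hbN : 1024 / (e ^+ 2 * delta) <= n%:R.
  apply: ltW; apply: lt_le_trans (archi_boundP ed) _.
  by rewrite ler_nat; apply: leq_trans hn; apply: leq_maxr.
have hmN : n%:R ^+ (2 * a + 6) <= m%:R :> R by rewrite -natrX ler_nat.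
have m0 : (0 < m)%N by apply: leq_trans hm; rewrite expn_gt0 n1.
set q := (n%:R ^+ a)^-1 : R.
have q0 : 0 < q by rewrite invr_gt0 exprn_gt0.
have hqp : forall i, q <= p i /\ p i <= 1 - q by move=> i; apply: hbm.
have hp : forall i, 0 <= p i <= 1.
  by move=> i; have [h1 h2] := hqp i; apply/andP; split; lra.
rewrite curvE.
case: (boolP (0 < f setT)) => hF; last first.
  have fz : forall S, f S = 0.
    move=> S; apply/eqP; rewrite eq_le f0 andbT.
    apply: le_trans (f_le_top fmon S) _; by rewrite leNgt.
  rewrite /sample_prob (eq_bigl xpredT); last first.
    move=> s /=; apply/forallP => T; apply/implyP => _.
    have [T0 _ ->] := opt_attain f k; by rewrite !fz mulr0.
  by rewrite (sum_w p m); lra.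
set z := e * q / (16 * n%:R ^+ 2).
have z0 : 0 < z.
  by apply: divr_gt0; [apply: mulr_gt0|apply: mulr_gt0 => //; apply: exprn_gt0].
have hzq : z <= q / 2.
  rewrite /z ler_pdivrMr; last by apply: mulr_gt0 => //; apply: exprn_gt0.
  have : 1 <= n%:R ^+ 2 :> R by rewrite exprn_ege1.
  move=> h; have : q <= q * n%:R ^+ 2 by rewrite ler_pMr.
  have : e * q <= q by apply: ler_piMl => //; apply: ltW.
  move=> h1 h2; set Q := q * n%:R ^+ 2 in h2.
  have -> : q / 2 * (16 * n%:R ^+ 2) = 8 * Q by rewrite /Q; field.
  lra.
have hze : 16 * n%:R ^+ 2 * z <= eps * q.
  have -> : 16 * n%:R ^+ 2 * z = e * q.
    by rewrite /z; field; rewrite lt0r_neq0 // exprn_gt0.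
  by apply: ler_wpM2r => //; apply: ltW.
apply: le_trans (prob_lb f0 fmon q0 hqp z0 m0 hF _) => /=.
  have := numbound hN1 e0 hd0 hbN hmN.
  rewrite -/q -/z => h; lra.
by move=> s hs; apply: (det_good f0 fmon fsub q0 hqp z0 hzq m0 hF).
Qed.
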